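(* Let $n,m,c$ be positive integers and $r,s,R,S$ nonnegative integers. Let $\alpha\in\mathrm{Par}(R,r)$, $\beta\in\mathrm{Par}(S,s)$, $\lambda\in\mathrm{Par}(n-R,c)$ and $\mu\in\mathrm{Par}(m-S,c)$. Define the annular $q$-Kreweras number \[ \mathrm{Kre}_q = q^{E}\, \frac{[nm]_q}{[n]_q[m]_q} \frac{[2c]_q}{2} \frac{[n-R]_q[m-S]_q}{[c]_q^2} \begin{bmatrix}n\\ r\end{bmatrix}_q\begin{bmatrix}m\\ s\end{bmatrix}_q \begin{bmatrix}r\\ \alpha\end{bmatrix}_q \begin{bmatrix}s\\ \beta\end{bmatrix}_q \begin{bmatrix}c\\ \lambda\end{bmatrix}_q \begin{bmatrix}c\\ \mu\end{bmatrix}_q, \] where \[ E=c(c-1)+r(c+r)+s(c+s)+r(n-c-R)+s(m-c-S)+r(R-r)+s(S-s)+c(n-R-c)+c(m-S-c)-\tau(\alpha)-\tau(\beta)-\tau(\lambda)-\tau(\mu). \] Then $\mathrm{Kre}_q$ is a polynomial in $q$.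
   Context: $\mathrm{Par}(N,k)$ is the set of integer partitions of $N$ with $k$ parts. Write $\lambda=(1^{m_1},2^{m_2},\dots)$ if $\lambda$ has $m_i$ parts equal to $i$. For a partition $\lambda$ with conjugate $\lambda'$, $\tau(\lambda)=\sum_{i\ge1}\lambda'_i\lambda'_{i+1}$. The $q$-notation is $[N]_q=(1-q^N)/(1-q)$, $[N]_q!=[1]_q\cdots[N]_q$, $\begin{bmatrix}N\\k\end{bmatrix}_q=\frac{[N]_q!}{[k]_q![N-k]_q!}$, and, for $\lambda$ with $k$ parts, $\begin{bmatrix}k\\ \lambda\end{bmatrix}_q=\frac{[k]_q!}{[m_1]_q![m_2]_q!\cdots}$. ''Polynomial'' here means polynomial with (possibly non-integer) rational coefficients. *)

(* Defs.v *)
From HB Require Import structures.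
From mathcomp Require Import all_boot all_order all_algebra fraction.
Set Implicit Arguments. Unset Strict Implicit. Unset Printing Implicit Defensive.
Import Order.TTheory GRing.Theory Num.Theory.

Definition is_part (l : seq nat) : bool :=
  sorted geq l && all (fun x => 0 < x) l.

Definition inPar (N k : nat) (l : seq nat) : bool :=
  [&& is_part l, sumn l == N & size l == k].

Definition mult (l : seq nat) (i : nat) : nat := count_mem i l.

(* conjugate partition: l'_i = #{ j : l_j >= i } (for i >= 1) *)
Definition conjp (l : seq nat) (i : nat) : nat := count (fun x => i <= x) l.

(* tau(l) = sum_{i >= 1} l'_i l'_{i+1}; the terms vanish for i > sumn l *)
Definition tau (l : seq nat) : nat :=
  \sum_(1 <= i < (sumn l).+1) conjp l i * conjp l i.+1.

Local Open Scope ring_scope.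
Notation "x %:F" := (@FracField.tofrac _ x) : ring_scope.

Definition RF := {fraction {poly rat}}.
Definition qv : RF := ('X : {poly rat})%:F.

Definition qint (N : nat) : RF := (1 - qv ^+ N) / (1 - qv).
Definition qfact (N : nat) : RF := \prod_(1 <= i < N.+1) qint i.
Definition qbinom (N k : nat) : RF := qfact N / (qfact k * qfact (N - k)).
(* q-multinomial [k ; l] = [k]! / prod_i [m_i]! ; m_i = 0 for i > sumn l *)
Definition qmultinom (k : nat) (l : seq nat) : RF :=
  qfact k / \prod_(1 <= i < (sumn l).+1) qfact (mult l i).

Definition Eexp (n m c r s R S : nat) (al be la mu : seq nat) : int :=
  (c%:Z * (c%:Z - 1) + r%:Z * (c%:Z + r%:Z) + s%:Z * (c%:Z + s%:Z)
   + r%:Z * (n%:Z - c%:Z - R%:Z) + s%:Z * (m%:Z - c%:Z - S%:Z)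
   + r%:Z * (R%:Z - r%:Z) + s%:Z * (S%:Z - s%:Z)
   + c%:Z * (n%:Z - R%:Z - c%:Z) + c%:Z * (m%:Z - S%:Z - c%:Z)
   - (tau al)%:Z - (tau be)%:Z - (tau la)%:Z - (tau mu)%:Z)%R.

Definition Kreq (n m c r s R S : nat) (al be la mu : seq nat) : RF :=
  qv ^ (Eexp n m c r s R S al be la mu)
  * (qint (n * m) / (qint n * qint m))
  * (qint (2 * c) / 2%:R)
  * (qint (n - R) * qint (m - S) / (qint c ^+ 2))
  * qbinom n r * qbinom m s
  * qmultinom r al * qmultinom s be * qmultinom c la * qmultinom c mu.

(* Main.v *)
Require Import Defs.
From HB Require Import structures.
From mathcomp Require Import all_boot all_order all_algebra fraction.
From mathcomp Require Import cyclotomic.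
From mathcomp Require Import zify ring lra.
Import Order.TTheory GRing.Theory Num.Theory.

Lemma mem_le_sumn (l : seq nat) x : x \in l -> x <= sumn l.
Proof.
elim: l => [|y l IH] //=; rewrite in_cons => /orP [/eqP -> | /IH H].
  exact: leq_addr.
exact: leq_trans H (leq_addl _ _).
Qed.

Lemma size_le_sumn (l : seq nat) : all (fun x => 0 < x) l -> size l <= sumn l.
Proof. elim: l => [|y l IH] //= /andP [Hy /IH]; lia. Qed.

Lemma sum_count_gen N (F : nat -> nat) (l : seq nat) :
  all (fun x => 0 < x <= N) l ->
  \sum_(1 <= i < N.+1) count_mem i l * F i = \sum_(x <- l) F x.
Proof.
elim: l => [|x l IH] /=.
  by rewrite big_nil big1 // => i _; rewrite mul0n.
move=> /andP [Hx /IH {}IH]; rewrite big_cons -IH.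
rewrite (eq_bigr (fun i => (x == i) * F i + count_mem i l * F i)); last first.
  by move=> i _; rewrite mulnDl.
rewrite big_split /=; congr (_ + _).
rewrite (bigD1_seq x) /=; last exact: iota_uniq.
  rewrite eqxx mul1n big1 ?addn0 // => i Hi.
  by rewrite eq_sym (negbTE Hi) mul0n.
by rewrite mem_index_iota; lia.
Qed.

Lemma part_facts (l : seq nat) : is_part l ->
  \sum_(1 <= i < (sumn l).+1) mult l i = size l /\
  \sum_(1 <= i < (sumn l).+1) (mult l i * i) = sumn l.
Proof.
move=> /andP [_ Hp].
have Hall : all (fun x => 0 < x <= sumn l) l.
  apply/allP => x Hx; rewrite (allP Hp x Hx) /=; exact: mem_le_sumn.
split.
  rewrite (eq_bigr (fun i => count_mem i l * 1)); last by move=> i _; rewrite muln1.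
  by rewrite sum_count_gen // sum1_size.
by rewrite /mult sum_count_gen // -sumnE.
Qed.

Lemma part_div (l : seq nat) d : is_part l -> 0 < d ->
  \sum_(1 <= i < (sumn l).+1) (mult l i %/ d) <= size l %/ d /\
  (d %| size l -> \sum_(1 <= i < (sumn l).+1) (mult l i %/ d) = size l %/ d ->
   d %| sumn l).
Proof.
move=> Hl Hd; have [F1 F2] := part_facts l Hl.
set N := sumn l; set k := size l.
set Sq := \sum_(1 <= i < N.+1) (mult l i %/ d).
set Sr := \sum_(1 <= i < N.+1) (mult l i %% d).
have Hk : k = Sq * d + Sr.
  rewrite /k -F1 /Sq /Sr big_distrl /= -big_split /=; apply: eq_bigr => i _.
  exact: divn_eq.
have Hkd : k %/ d = Sq + Sr %/ d by rewrite Hk divnMDl.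
split; first by rewrite Hkd leq_addr.
move=> Hdk HS.
have Hr0 : Sr %/ d = 0 by move: Hkd; rewrite HS; lia.
have HdSr : d %| Sr by rewrite -(dvdn_addr _ (dvdn_mull Sq (dvdnn d))) -Hk.
have HSr : Sr = 0.
  by case/dvdnP: HdSr Hr0 => q ->; rewrite mulnK //; move=> ->.
move: HSr; rewrite /Sr => /eqP; rewrite sum_nat_seq_eq0 => /allP H0.
rewrite /N -F2 big_seq; apply: dvdn_sum => i Hi.
by apply: dvdn_mulr; move: (H0 i Hi) => /=.
Qed.

Lemma binom_div n r d : r <= n -> 0 < d ->
  r %/ d + (n - r) %/ d <= n %/ d /\
  (d %| n -> ~~ (d %| r) -> r %/ d + (n - r) %/ d < n %/ d).
Proof.
move=> Hr Hd; have E := divnD r (n - r) Hd; rewrite subnKC // in E.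
rewrite E; split; first exact: leq_addr.
move=> Hn Hnr; rewrite -addn1 leq_add2l lt0b.
have Hpos : 0 < r %% d + (n - r) %% d.
  by move: Hnr; rewrite /dvdn lt0n; case: (r %% d) => // _ ; rewrite addSn.
have Hdv : d %| r %% d + (n - r) %% d by rewrite /dvdn modnDm subnKC.
exact: (dvdn_leq Hpos Hdv).
Qed.

Lemma conjp_le l i : conjp l i <= size l.
Proof. exact: count_size. Qed.

Lemma sum_leq_x x S : x <= S -> \sum_(1 <= i < S.+1) (i <= x) = x.
Proof.
move=> HxS; rewrite (big_cat_nat _ (n := x.+1)) //=.
rewrite (eq_big_nat _ _ (F2 := fun _ => 1)); last by move=> i /andP [_]; rewrite ltnS => ->.
rewrite [X in _ + X](eq_big_nat _ _ (F2 := fun _ => 0)); last first.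
  by move=> i /andP [Hi _]; rewrite leqNgt Hi.
by rewrite !sum_nat_const_nat muln0 addn0 muln1 subn1.
Qed.

Lemma sum_conjp l S : all (fun x => x <= S) l ->
  \sum_(1 <= i < S.+1) conjp l i = sumn l.
Proof.
elim: l => [|x l IH] /=.
  by rewrite big1.
move=> /andP [Hx /IH {}IH].
rewrite (eq_bigr (fun i => (i <= x) + conjp l i)) // big_split /= IH.
by rewrite sum_leq_x.
Qed.

Lemma tau_bound l : is_part l -> tau l <= size l * (sumn l - size l).
Proof.
move=> Hl; have Hp : all (fun x => 0 < x) l by case/andP: Hl.
set S := sumn l.
have Hall : all (fun x => x <= S) l by apply/allP => x Hx; exact: mem_le_sumn.
have Hsum := sum_conjp l S Hall.
have H1 : conjp l 1 = size l.
  rewrite /conjp -(count_predT l); apply: eq_in_count => x Hx /=.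
  by rewrite (allP Hp x Hx).
have HS1 : conjp l S.+1 = 0.
  apply/eqP; rewrite -leqn0 leqNgt -has_count; apply/hasPn => x Hx /=.
  by rewrite -ltnNge ltnS (allP Hall x Hx).
have Hsh : \sum_(1 <= i < S.+1) conjp l i.+1 = S - size l.
  have : \sum_(1 <= i < S.+2) conjp l i = size l + \sum_(1 <= i < S.+1) conjp l i.+1.
    by rewrite big_ltn // H1 big_add1.
  rewrite big_nat_recr //= HS1 addn0 Hsum => H; move: H; rewrite -/S; lia.
rewrite /tau -/S -Hsh big_distrr /=; apply: leq_sum => i _.
by rewrite leq_mul2r conjp_le orbT.
Qed.

Lemma inPar_facts N k l : inPar N k l ->
  [/\ is_part l, sumn l = N, size l = k & k <= N].
Proof.
case/and3P => Hp /eqP HN /eqP Hk; split => //.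
by rewrite -HN -Hk; apply: size_le_sumn; case/andP: Hp.
Qed.
Arguments inPar_facts {N k l}.

Lemma lam_ineq d N k l : 0 < d -> inPar N k l ->
  (d %| k) + \sum_(1 <= i < (sumn l).+1) (mult l i %/ d) <= (d %| N) + k %/ d.
Proof.
move=> Hd Hl; have [Hp HN Hk _] := inPar_facts Hl.
have [H1 H2] := part_div _ _ Hp Hd; rewrite HN Hk in H1 H2; rewrite HN.
case Hdk: (d %| k) => /=; last by rewrite add0n (leq_trans H1) // leq_addl.
case: (ltngtP (\sum_(1 <= i < N.+1) (mult l i %/ d)) (k %/ d)).
- by move=> H; rewrite add1n (leq_trans H) // leq_addl.
- by move=> H; move: H1; rewrite leqNgt H.
- by move=> H; rewrite (H2 Hdk H) add1n addSn H.
Qed.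
Arguments lam_ineq {d N k l}.


Lemma pure (bn bm bc bnm b2c bnR bmS br : bool) (N M Rd NRd Sd MSd C Sa Sb Sl Su : nat) :
 (bn -> bnm) -> (bm -> bnm) -> (bc -> b2c) ->
 Rd + NRd <= N -> (bn -> ~~ br -> Rd + NRd < N) -> Sd + MSd <= M ->
 Sa <= Rd -> (br -> Sa = Rd -> bn -> bnR) -> Sb <= Sd ->
 bc + Sl <= bnR + C -> bc + Su <= bmS + C -> Sl <= C -> Su <= C ->
 bn + bm + 2 * bc + (Rd + NRd) + (Sd + MSd) + Sa + Sb + Sl + Su
   <= bnm + b2c + bnR + bmS + N + M + Rd + Sd + C + C.
Proof.
move=> H1 H2 H3 H4 H5 H6 H7 H8 H9 H10 H11 H12 H13.
case: bn H1 H5 H8 => [H1 H5 H8|_ _ _]; last first.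
  case: bm H2 => [H2|_]; last by (simpl in *; lia).
  by rewrite H2 //; (simpl in *; lia).
rewrite H1 // in H10 *.
case: bc H3 H10 H11 => [H3 H10 H11|_ H10 H11].
  by rewrite H3 //; (simpl in *; lia).
case: br H5 H8 => [H5 H8|H5 _]; last by have := H5 isT isT; simpl in *; lia.
case: (ltngtP Sa Rd) => HSa; [(simpl in *; lia) | (simpl in *; lia) |].
by move: (H8 isT HSa isT) H10 => ->; (simpl in *; lia).
Qed.

Arguments pure {bn bm bc bnm b2c bnR bmS br N M Rd NRd Sd MSd C Sa Sb Sl Su}.

Lemma main_arith d n m c r s R S al be la mu :
  1 < d -> 0 < n -> 0 < m -> 0 < c ->
  inPar R r al -> inPar S s be -> inPar (n - R) c la -> inPar (m - S) c mu ->
  (d %| n) + (d %| m) + 2 * (d %| c) + (r %/ d + (n - r) %/ d) + (s %/ d + (m - s) %/ d)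
  + \sum_(1 <= i < (sumn al).+1) (mult al i %/ d)
  + \sum_(1 <= i < (sumn be).+1) (mult be i %/ d)
  + \sum_(1 <= i < (sumn la).+1) (mult la i %/ d)
  + \sum_(1 <= i < (sumn mu).+1) (mult mu i %/ d)
  <= (d %| n * m) + (d %| 2 * c) + (d %| n - R) + (d %| m - S)
     + n %/ d + m %/ d + r %/ d + s %/ d + c %/ d + c %/ d.
Proof.
move=> Hd1 Hn Hm Hc Ha Hb Hl Hu.
have Hd : 0 < d by apply: ltnW.
have [Hpa HRa Har HrR] := inPar_facts Ha.
have [Hpb HSb Hbs HsS] := inPar_facts Hb.
have [Hpl _ Hlc HcR] := inPar_facts Hl.
have [Hpu _ Huc HcS] := inPar_facts Hu.
have HRn : R <= n by clear -Hc HcR; lia.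
have HSm : S <= m by clear -Hc HcS; lia.
have [Ga1 Ga2] := part_div _ _ Hpa Hd.
have [Gb1 _] := part_div _ _ Hpb Hd.
have [Gl1 _] := part_div _ _ Hpl Hd.
have [Gu1 _] := part_div _ _ Hpu Hd.
rewrite Har in Ga1 Ga2; rewrite Hbs in Gb1; rewrite Hlc in Gl1; rewrite Huc in Gu1.
have [Bn1 Bn2] := binom_div _ _ _ (leq_trans HrR HRn) Hd.
have [Bm1 _] := binom_div _ _ _ (leq_trans HsS HSm) Hd.
have P1 : (d %| n) -> d %| n * m by move=> H; apply: dvdn_mulr.
have P2 : (d %| m) -> d %| n * m by move=> H; apply: dvdn_mull.
have P3 : (d %| c) -> d %| 2 * c by move=> H; apply: dvdn_mull.
have P8 : (d %| r) -> \sum_(1 <= i < (sumn al).+1) (mult al i %/ d) = r %/ d ->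
   (d %| n) -> d %| n - R.
  by move=> H1 H2 H3; apply: dvdn_sub => //; rewrite -HRa; exact: Ga2 H1 H2.
have P10 := lam_ineq Hd Hl.
have P11 := lam_ineq Hd Hu.
exact: (pure P1 P2 P3 Bn1 Bn2 Bm1 Ga1 P8 Gb1 P10 P11 Gl1 Gu1).
Qed.

Local Open Scope ring_scope.

Definition Phip (d : nat) : {poly rat} := map_poly intr 'Phi_d.
Definition PhiF (d : nat) : RF := (Phip d)%:F.
Definition Cyc (B : nat) (v : nat -> int) : RF := \prod_(2 <= d < B) PhiF d ^ v d.

Lemma PhiF_neq0 d : PhiF d != 0.
Proof.
rewrite /PhiF tofrac_eq0 /Phip; apply: monic_neq0.
by apply: monic_map; apply: Cyclotomic_monic.
Qed.

Lemma CycM B v w : Cyc B v * Cyc B w = Cyc B (fun d => v d + w d).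
Proof.
rewrite /Cyc -big_split /=; apply: eq_bigr => d _.
by rewrite expfzDr // PhiF_neq0.
Qed.

Lemma CycV B v : (Cyc B v)^-1 = Cyc B (fun d => - v d).
Proof.
by rewrite /Cyc -prodfV; apply: eq_bigr => d _; rewrite invr_expz.
Qed.

Lemma Cyc0 B : Cyc B (fun _ => 0) = 1.
Proof. by rewrite /Cyc big1 // => d _; rewrite expr0z. Qed.

Lemma Cyc_ext B v w : (forall d, (2 <= d < B)%N -> v d = w d) -> Cyc B v = Cyc B w.
Proof. by move=> H; rewrite /Cyc; apply: eq_big_nat => d /H ->. Qed.

Lemma Cyc_prod B (I : Type) (s : seq I) (F : I -> nat -> int) :
  \prod_(i <- s) Cyc B (F i) = Cyc B (fun d => \sum_(i <- s) F i d).
Proof.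
elim: s => [|x s IH].
  by rewrite big_nil -(Cyc0 B); apply: Cyc_ext => d _; rewrite big_nil.
by rewrite big_cons IH CycM; apply: Cyc_ext => d _; rewrite big_cons.
Qed.

Lemma Cyc_poly B v : (forall d, (2 <= d < B)%N -> 0 <= v d) ->
  exists p : {poly rat}, Cyc B v = p%:F.
Proof.
move=> H; exists (\prod_(2 <= d < B) Phip d ^+ `|v d|%N).
rewrite rmorph_prod /Cyc; apply: eq_big_nat => d /H.
by case: (v d) => // k _; rewrite rmorphXn.
Qed.

Lemma Xn1 N : (0 < N)%N -> ('X^N - 1 : {poly rat}) = \prod_(d <- divisors N) Phip d.
Proof.
move=> HN; rewrite /Phip -rmorph_prod /= prod_Cyclotomic //.
by rewrite rmorphB /= map_polyXn rmorph1.
Qed.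

Lemma Phip1 : Phip 1 = 'X - 1.
Proof.
have := @Xn1 1%N (ltn0Sn 0); rewrite expr1 => ->.
by have -> : divisors 1 = [:: 1%N] by []; rewrite big_seq1.
Qed.

Lemma qint_Cyc B N : (0 < N)%N -> (N < B)%N ->
  qint N = Cyc B (fun d => Posz (d %| N)%N).
Proof.
move=> HN HB.
have E1 : qint N = ('X^N - 1 : {poly rat})%:F / (Phip 1)%:F.
  rewrite /qint Phip1 !rmorphB /= rmorph1 rmorphXn /= -/qv.
  by rewrite -mulrNN -invrN !opprB.
rewrite E1 Xn1 //.
have P : perm_eq (divisors N) [seq d <- index_iota 1 B | d %| N]%N.
  apply: uniq_perm; first exact: divisors_uniq.
    by apply: filter_uniq; apply: iota_uniq.
  move=> d; rewrite mem_filter -dvdn_divisors // mem_index_iota.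
  case Hd: (d %| N)%N => //=; symmetry.
  have := dvdn_leq HN Hd; case: d Hd => [|d] Hd; first by rewrite dvd0n in Hd; move: Hd HN => /eqP -> .
  move=> Hle; apply/andP; split => //; exact: leq_ltn_trans Hle HB.
rewrite (perm_big _ P) /= big_filter rmorph_prod /=.
have B1 : (1 < B)%N by apply: leq_ltn_trans HB.

rewrite big_ltn_cond //= dvd1n mulrC /PhiF mulKf; last by rewrite -/(PhiF 1) PhiF_neq0.
rewrite /Cyc big_mkcond /=; apply: eq_bigr => d _.
by case: (d %| N)%N; rewrite ?expr1z ?expr0z.
Qed.

Lemma qfact_Cyc B N : (N < B)%N -> qfact N = Cyc B (fun d => Posz (N %/ d)%N).
Proof.
elim: N => [|N IH] HB.
  rewrite /qfact big_geq // -(Cyc0 B); apply: Cyc_ext => d _.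
  by rewrite div0n.
rewrite /qfact big_nat_recr //= -/(qfact N) IH ?(ltnW HB) //.
rewrite (qint_Cyc B) // CycM; apply: Cyc_ext => d /andP [Hd _].
by rewrite divnS ?(leq_trans _ Hd) // PoszD addrC.
Qed.

Lemma qbinom_Cyc B N k : (k <= N)%N -> (N < B)%N ->
  qbinom N k = Cyc B (fun d => Posz (N %/ d)%N - (Posz (k %/ d)%N + Posz ((N - k) %/ d)%N)).
Proof.
move=> Hk HB; rewrite /qbinom !(qfact_Cyc B) //; last 2 first.
- by apply: leq_ltn_trans HB; apply: leq_subr.
- exact: leq_ltn_trans HB.
by rewrite CycM CycV CycM.
Qed.

Lemma count_mem_le (l : seq nat) i : (mult l i <= size l)%N.
Proof. exact: count_size. Qed.

Lemma qmultinom_Cyc B k l : (size l <= k)%N -> (k < B)%N ->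
  qmultinom k l = Cyc B (fun d => Posz (k %/ d)%N -
     Posz (\sum_(1 <= i < (sumn l).+1) (mult l i %/ d))%N).
Proof.
move=> Hk HB; rewrite /qmultinom (qfact_Cyc B) //.
rewrite (eq_big_nat _ _ (F2 := fun i => Cyc B (fun d => Posz (mult l i %/ d)%N))); last first.
  move=> i _; apply: qfact_Cyc; apply: leq_ltn_trans HB.
  exact: leq_trans (count_mem_le l i) Hk.
rewrite Cyc_prod CycV CycM; apply: Cyc_ext => d _.
by rewrite (big_morph Posz PoszD (erefl _)).
Qed.

Lemma shape_alg (X h a b b' x y z w p1 p2 p3 p4 p5 p6 : RF) :
  X * (a / (b * b')) * (x / h) * (y * z / w ^+ 2) * p1 * p2 * p3 * p4 * p5 * p6
  = (X / h) * (a * b^-1 * b'^-1 * x * y * z * w^-1 * w^-1 * p1 * p2 * p3 * p4 * p5 * p6).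
Proof. by rewrite expr2 !invfM; ring. Qed.

Lemma E_nonneg (n m c r s R S : nat) (al be la mu : seq nat) :
  (0 < c)%N -> inPar R r al -> inPar S s be ->
  inPar (n - R) c la -> inPar (m - S) c mu ->
  0 <= Eexp n m c r s R S al be la mu.
Proof.
move=> Hc Ha Hb Hl Hu.
have [Hpa HRa Har HrR] := inPar_facts Ha.
have [Hpb HSb Hbs HsS] := inPar_facts Hb.
have [Hpl Hsl Hlc HcR] := inPar_facts Hl.
have [Hpu Hsu Huc HcS] := inPar_facts Hu.
have HRn : (R <= n)%N by clear -Hc HcR; lia.
have HSm : (S <= m)%N by clear -Hc HcS; lia.
have Ta := tau_bound _ Hpa; rewrite HRa Har in Ta.
have Tb := tau_bound _ Hpb; rewrite HSb Hbs in Tb.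
have Tl := tau_bound _ Hpl; rewrite Hsl Hlc in Tl.
have Tu := tau_bound _ Hpu; rewrite Hsu Huc in Tu.
have Ta' : (tau al <= r * n)%N.
  by apply: (leq_trans Ta); apply: leq_mul => //; apply: leq_trans (leq_subr _ _) HRn.
have Tb' : (tau be <= s * m)%N.
  by apply: (leq_trans Tb); apply: leq_mul => //; apply: leq_trans (leq_subr _ _) HSm.
move: Ta' Tb' Tl Tu; rewrite -!lez_nat !PoszM -!subzn // => Ta' Tb' Tl Tu.
have -> : Eexp n m c r s R S al be la mu =
   (r%:Z * n%:Z - (tau al)%:Z) + (s%:Z * m%:Z - (tau be)%:Z)
   + (c%:Z * (n%:Z - R%:Z - c%:Z) - (tau la)%:Z)
   + (c%:Z * (m%:Z - S%:Z - c%:Z) - (tau mu)%:Z) + c%:Z * (c%:Z - 1).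
  by rewrite /Eexp; ring.
have Hc1 : 0 <= c%:Z * (c%:Z - 1).
  by apply: mulr_ge0 => //; rewrite subr_ge0 lez_nat.
have h1 : 0 <= r%:Z * n%:Z - (tau al)%:Z by rewrite subr_ge0.
have h2 : 0 <= s%:Z * m%:Z - (tau be)%:Z by rewrite subr_ge0.
have h3 : 0 <= c%:Z * (n%:Z - R%:Z - c%:Z) - (tau la)%:Z by rewrite subr_ge0.
have h4 : 0 <= c%:Z * (m%:Z - S%:Z - c%:Z) - (tau mu)%:Z by rewrite subr_ge0.
by do 4! apply: addr_ge0 => //.
Qed.

Lemma two_inv : ((2%:R^-1 : rat)%:P)%:F = (2%:R : RF)^-1.
Proof.
have nz : (2%:R : RF) != 0.
  by rewrite -(rmorph_nat (@tofrac _)) tofrac_eq0 -polyC_natr polyC_eq0 pnatr_eq0.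
apply: (mulIf nz); rewrite mulVf //.
by rewrite -(rmorph_nat (@tofrac _)) -rmorphM /= -polyC_natr -polyCM mulVf ?pnatr_eq0.
Qed.

Theorem proposition3p2 (n m c r s R S : nat) (al be la mu : seq nat) :
  (0 < n)%N -> (0 < m)%N -> (0 < c)%N ->
  inPar R r al -> inPar S s be ->
  inPar (n - R) c la -> inPar (m - S) c mu ->
  exists p : {poly rat}, Kreq n m c r s R S al be la mu = p%:F.
Proof.
move=> Hn Hm Hc Ha Hb Hl Hu.
have HE := E_nonneg n m c r s R S al be la mu Hc Ha Hb Hl Hu.
have [Hpa HRa Har HrR] := inPar_facts Ha.
have [Hpb HSb Hbs HsS] := inPar_facts Hb.
have [Hpl Hsl Hlc HcR] := inPar_facts Hl.
have [Hpu Hsu Huc HcS] := inPar_facts Hu.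
have HRn : (R <= n)%N by clear -Hc HcR; lia.
have HSm : (S <= m)%N by clear -Hc HcS; lia.
set B := (n * m + 2 * c + n + m).+1.
have hnm : (n * m < B)%N by rewrite /B; lia.
have hn : (n < B)%N by rewrite /B; lia.
have hm : (m < B)%N by rewrite /B; lia.
have h2c : (2 * c < B)%N by rewrite /B; lia.
have hc : (c < B)%N by rewrite /B; lia.
have hnR : (n - R < B)%N by rewrite /B; lia.
have hmS : (m - S < B)%N by rewrite /B; lia.
have hr : (r < B)%N by rewrite /B; lia.
have hs : (s < B)%N by rewrite /B; lia.
rewrite /Kreq.
rewrite (qint_Cyc B (n * m)) ?muln_gt0 ?Hn //.
rewrite (qint_Cyc B n) // (qint_Cyc B m) // (qint_Cyc B (2 * c)) ?muln_gt0 //.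
rewrite (qint_Cyc B (n - R)) ?(leq_trans Hc) // (qint_Cyc B (m - S)) ?(leq_trans Hc) //.
rewrite (qint_Cyc B c) //.
rewrite (qbinom_Cyc B n r) ?(leq_trans HrR) // (qbinom_Cyc B m s) ?(leq_trans HsS) //.
rewrite (qmultinom_Cyc B r al) ?Har // (qmultinom_Cyc B s be) ?Hbs //.
rewrite (qmultinom_Cyc B c la) ?Hlc //.
rewrite (qmultinom_Cyc B c mu) ?Huc //.
rewrite shape_alg !CycV !CycM.
set V := (fun d : nat => _).
have [p Hp] : exists p : {poly rat}, Cyc B V = p%:F.
  apply: Cyc_poly => d /andP [Hd _].
  have Hd1 : (1 < d)%N by [].
  have H := main_arith d n m c r s R S al be la mu Hd1 Hn Hm Hc Ha Hb Hl Hu.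
  rewrite -lez_nat -subr_ge0 in H; apply: (le_trans H).
  rewrite le_eqVlt; apply/orP; left; apply/eqP.
  rewrite /V /= !PoszD ?PoszM; ring.
have [e He] : exists e : nat, Eexp n m c r s R S al be la mu = Posz e.
  by case: (Eexp n m c r s R S al be la mu) HE => // e _; exists e.
exists ('X^e * (2%:R^-1)%:P * p).
rewrite He Hp !rmorphM /= rmorphXn two_inv.
by [].
Qed.
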